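(* Let $n$ be an integer and let $V$ be a finite dimensional graded vector space concentrated in degrees $\geq2$. Let $\gamma\in\mathrm{GC}_{V,n}$ be a graph of loop order $g$ with $D$ decorations in $V^*$. Then the cohomological degree of $\gamma$ satisfies \[|\gamma|\leq-(n-3)(g-1)-D+1.\] In particular, if $n\geq4$ and $g\geq1$ then $|\gamma|\leq0$.
   Context: $\mathrm{GC}_{V,n}$ is spanned by connected graphs without hairs, with $v\ge1$ vertices and $e$ edges (loop order $g=e-v+1$), each vertex carrying a (possibly empty) monomial of decorations from $V^*$ (an element of $(V^k)^*$ having degree $-k$), such that every vertex is at least trivalent where each decoration at it counts $+1$ to its valence. The cohomological degree of such a graph in $\mathrm{GC}_{V,n}$ is $|\gamma|=nv-(n-1)e+(\text{total degree of the decorations})+1$. *)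

(* Defs.v *)
From mathcomp Require Import all_boot all_order all_algebra.
Unset Strict Implicit. Unset Printing Implicit Defensive.
Import Order.TTheory GRing.Theory Num.Theory.
Local Open Scope ring_scope.

(* A graded vector space V is recorded by its graded dimension:
   dimV k = dim V^k.  Decorations are elements of (V^k)^*, of degree -k;
   for the degree count only the degree k of each decoration matters. *)
Definition finite_graded (dimV : int -> nat) : Prop :=
  exists N : nat, forall k : int, (N%:Z < `|k|%:Z) -> dimV k = 0%N.

Definition concentrated_ge2 (dimV : int -> nat) : Prop :=
  forall k : int, dimV k <> 0%N -> 2 <= k.

(* Hairless decorated (multi)graph: vertices 'I_nv, edges a list of
   (unordered, stored as ordered) pairs of vertices (multiple edges and
   loops allowed), decorations at each vertex: the list of degrees k of
   the V^* decorations (a decoration of V^k-dual type, of degree -k). *)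
Record dgraph := DGraph {
  nv : nat;
  edges : seq ('I_nv * 'I_nv);
  deco : 'I_nv -> seq int }.

Definition ne (G : dgraph) : nat := size (edges G).

Definition gc_adj (G : dgraph) : rel 'I_(nv G) :=
  fun x y => has (fun p => (p == (x, y)) || (p == (y, x))) (edges G).

Definition gc_connected (G : dgraph) : Prop :=
  forall x y : 'I_(nv G), connect (gc_adj G) x y.

Definition valence (G : dgraph) (x : 'I_(nv G)) : nat :=
  (count (fun p => p.1 == x) (edges G) + count (fun p => p.2 == x) (edges G))%N.

Definition is_GC_graph (dimV : int -> nat) (G : dgraph) : Prop :=
  [/\ (1 <= nv G)%N, gc_connected G,
      forall x, (3 <= valence G x + size (deco G x))%N
    & forall x k, k \in deco G x -> dimV k <> 0%N].

Definition num_deco (G : dgraph) : nat := (\sum_(x < nv G) size (deco G x))%N.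

Definition deco_degree (G : dgraph) : int :=
  \sum_(x < nv G) \sum_(k <- deco G x) (- k).

Definition loop_order (G : dgraph) : int := (ne G)%:Z - (nv G)%:Z + 1.

Definition gc_degree (n : int) (G : dgraph) : int :=
  n * (nv G)%:Z - (n - 1) * (ne G)%:Z + deco_degree G + 1.

(* Main.v *)
Require Import Defs.
From mathcomp Require Import all_boot all_order all_algebra.
From mathcomp Require Import zify ring.
Import Order.TTheory GRing.Theory Num.Theory.
Local Open Scope ring_scope.

Lemma sum_count_fst (T : finType) (U : Type) (f : U -> T) (s : seq U) :
  (\sum_(x : T) count (fun p => f p == x) s = size s)%N.
Proof.
elim: s => [|a s IH] /=; first by rewrite big1.
rewrite big_split /= IH (bigD1 (f a)) //= eqxx big1 ?addn0 ?add1n //.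
by move=> i /negbTE; rewrite eq_sym => ->.
Qed.

Lemma sum_valence (G : dgraph) :
  (\sum_(x < nv G) valence G x = ne G + ne G)%N.
Proof.
rewrite /valence big_split /= (sum_count_fst _ _ (fun p => p.1))
 (sum_count_fst _ _ (fun p => p.2)) /ne. done.
Qed.

Lemma deco_bound (s : seq int) :
  (forall k, k \in s -> 2 <= k) -> \sum_(k <- s) (- k) <= - (size s)%:Z - (size s)%:Z.
Proof.
elim: s => [|a s IH] H; first by rewrite big_nil.
rewrite big_cons /=.
have ha : 2 <= a by apply: H; rewrite inE eqxx.
have := IH (fun k hk => H k ltac:(by rewrite inE hk orbT)).
move: (\sum_(k <- s) - k) => S. lia.
Qed.

Theorem lemma13p5 (n : int) (dimV : int -> nat)
  (hfin : finite_graded dimV) (hge2 : concentrated_ge2 dimV)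
  (G : dgraph) (hG : is_GC_graph dimV G) :
  gc_degree n G <= - (n - 3) * (loop_order G - 1) - (num_deco G)%:Z + 1
  /\ (4 <= n -> 1 <= loop_order G -> gc_degree n G <= 0).
Proof.
case: hG => hv _ htri hdeg.
have hDD : deco_degree G <= - (num_deco G)%:Z - (num_deco G)%:Z.
  rewrite /deco_degree /num_deco.
  elim/big_rec2: _ => [|i y1 y2 _ IH]; first by [].
  have := deco_bound (deco G i) (fun k hk => hge2 k (hdeg i k hk)).
  rewrite PoszD; lia.
have h3 : (nv G + nv G + nv G <= ne G + ne G + num_deco G)%N.
  have h : (\sum_(i < nv G) 3 <= \sum_(i < nv G) (valence G i + size (deco G i)))%N.
    by apply: leq_sum => i _; exact: htri i.
  rewrite big_split /= sum_valence sum_nat_const card_ord in h.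
  move: h; rewrite -/(num_deco G); lia.
rewrite /gc_degree /loop_order.
move: hDD h3 hv; set V := nv G; set E := ne G; set D := num_deco G;
  set DD := deco_degree G => hDD h3 hv.
have key : n * V%:Z - (n - 1) * E%:Z + DD + 1
   = - (n - 3) * (E%:Z - V%:Z + 1 - 1) - D%:Z + 1 - (E%:Z + E%:Z + D%:Z - V%:Z - V%:Z - V%:Z) + (DD + D%:Z + D%:Z).
  ring.
rewrite key.
split; first by lia.
move=> hn hg.
nia.
Qed.
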